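(* Let $\zeta_*\in(0,1]$, $\gamma_*\in(0,1]$, and $\nu_*=(1-\zeta_* )\delta_0+\zeta_*\delta_{\gamma_*}$. Consider the optimization problem of minimizing $\|F_\nu-F_{\nu_*}\|_\infty$ over probability distributions $\nu$ on $\mathbb{R}$ subject to $\nu((0,\infty))\le\frac12\zeta_*$. Then the optimal point of this problem is \[ \nu_{OPT}=(1-\tfrac12\zeta_* )\delta_0+\tfrac12\zeta_*\delta_{2\gamma_*}, \] i.e., $\nu_{OPT}$ is feasible and attains the minimum value.
   Context: $\delta_x$ denotes the point mass at $x$. For a probability distribution $\nu$ on $\mathbb{R}$, $F_\nu(t):=\mathbb{P}_{\mu\sim\nu,\,X\sim\mathcal{N}(\mu,1)}(X\le t)$, and $\|\cdot\|_\infty$ is the sup norm over $t\in\mathbb{R}$. *)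

(* Defs.v *)
From HB Require Import structures.
From mathcomp Require Import all_boot all_order all_algebra.
From mathcomp Require Import all_classical all_reals all_analysis.
Set Implicit Arguments. Unset Strict Implicit. Unset Printing Implicit Defensive.
Import Order.TTheory GRing.Theory Num.Theory.
Local Open Scope classical_set_scope.
Local Open Scope ring_scope.

Definition Phi {R : realType} (t : R) : R :=
  fine (normal_prob 0 1 `]-oo, t]).

(* F_nu(t) = P_{mu ~ nu, X ~ N(mu,1)}(X <= t) = \int Phi(t - mu) dnu(mu). *)
Definition Fmix {R : realType} (nu : probability R R) (t : R) : R :=
  fine (\int[nu]_(mu in setT) (Phi (t - mu))%:E)%E.

Definition sup_dist {R : realType} (nu nu' : probability R R) : \bar R :=
  ereal_sup [set (`| Fmix nu t - Fmix nu' t |)%:E | t in [set: R]].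

Definition two_point {R : realType} (p a b : R) (A : set R) : \bar R :=
  ((1 - p) * (\1_A a) + p * (\1_A b))%:E.

(* Main.v *)
Require Import Defs.
From HB Require Import structures.
From mathcomp Require Import all_boot all_order all_algebra.
From mathcomp Require Import all_classical all_reals all_analysis.
From mathcomp Require Import measurable_realfun.
From mathcomp Require Import ring lra.
Import Order.TTheory GRing.Theory Num.Theory.
Import numFieldTopology.Exports.
Local Open Scope classical_set_scope.
Local Open Scope ring_scope.

Section P1.
Context {R : realType}.
Local Notation N := (@normal_prob R 0 1).

Lemma N_fin (A : set R) : measurable A -> N A \is a fin_num.
Proof.
move=> mA; rewrite ge0_fin_numE ?measure_ge0//.
exact: (le_lt_trans (probability_le1 N mA) (ltey _)).
Qed.

Lemma PhiE (t : R) : ((Phi t)%:E = N `]-oo, t])%E.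
Proof. by rewrite /Phi fineK// N_fin. Qed.

Lemma Phi_split (u v : R) : u <= v ->
  ((Phi v)%:E = (Phi u)%:E + N `]u, v])%E.
Proof.
move=> uv; rewrite !PhiE (@itv_bndbnd_setU _ _ _ (BRight u)) ?bnd_simp//.
rewrite measureU//.
apply/seteqP; split => x //=; rewrite !in_itv/= => -[xu /andP[ux _]].
by move: (lt_le_trans ux xu); rewrite ltxx.
Qed.

Lemma NocE (u v : R) : N `]u, v] = (\int[lebesgue_measure]_(x in `[u, v]) (normal_pdf 0 1 x)%:E)%E.
Proof.
rewrite /normal_prob integral_itv_obnd_cbnd//.
apply/measurable_EFinP; apply: measurable_funTS; exact: measurable_normal_pdf.
Qed.


Lemma N_shift_w (u v d k : R) : u <= v ->
  (forall x, u <= x <= v -> k <= d * x + d ^+ 2 / 2) ->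
  ((expR k)%:E * N `](u + d)%R, (v + d)%R] <= N `]u, v])%E.
Proof.
move=> uv hx; rewrite !NocE.
have DF : (fun x : R => x + d)^`()%classic = cst 1.
  by apply/funext => z; rewrite derive1E deriveD// derive_id derive_cst addr0.
rewrite (@integration_by_substitution_increasing R (fun x => x + d) (normal_pdf 0 1) u v uv); last 6 first.
- by move=> x y _ _; rewrite ltrD2r.
- by rewrite DF => ? _; exact: cst_continuous.
- by rewrite DF; exact: is_cvg_cst.
- by rewrite DF; exact: is_cvg_cst.
- split.
  + by move=> x _; apply: derivableD.
  + by apply: cvg_at_right_filter; apply: cvgD; [exact: cvg_id | exact: cvg_cst].
  + by apply: cvg_at_left_filter; apply: cvgD; [exact: cvg_id | exact: cvg_cst].
- by apply: continuous_subspaceT; exact: continuous_normal_pdf (oner_neq0 R).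
rewrite DF -ge0_integralZl//; last 2 first.
- apply/measurable_EFinP; apply: measurable_funTS; apply: measurable_funM => //.
  apply: measurableT_comp; first exact: measurable_normal_pdf.
  exact: measurable_funD.
- by move=> x _; rewrite !fctE /= mulr1 lee_fin normal_pdf_ge0.
apply: ge0_le_integral => //.
- by move=> x _; rewrite -EFinM lee_fin mulr_ge0 ?expR_ge0// !fctE /= mulr1 normal_pdf_ge0.
- apply/measurable_EFinP; apply: measurable_funTS; apply: measurable_funM => //.
  apply: measurable_funM => //.
  apply: measurableT_comp; first exact: measurable_normal_pdf.
  exact: measurable_funD.
- by apply/measurable_EFinP; apply: measurable_funTS; exact: measurable_normal_pdf.
- move=> x; rewrite /= in_itv/= => xuv.
  rewrite !fctE /= mulr1 -EFinM lee_fin (normal_pdfE _ (oner_neq0 R)) /=.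
  rewrite mulrCA; apply: ler_wpM2l; first exact: normal_peak_ge0.
  rewrite /normal_fun -expRD ler_expR !subr0 expr1n.
  have := hx x xuv; lra.
Qed.

Lemma Phi_sym (a : R) : Phi (- a) = 1 - Phi a.
Proof.
have h1 : N `]-oo, (- a)%R] = N `]a, +oo[.
  rewrite /normal_prob ge0_integration_by_substitutionNy; last 2 first.
  - by apply: continuous_subspaceT; exact: continuous_normal_pdf (oner_neq0 R).
  - by move=> x _; exact: normal_pdf_ge0.
  rewrite integral_itv_obnd_cbnd; last first.
    by apply/measurable_EFinP; apply: measurable_funTS; exact: measurable_normal_pdf.
  apply: eq_integral => x _; congr EFin.
  by rewrite /= (normal_pdfE _ (oner_neq0 R)) /= /normal_fun !subr0 sqrrN.
have h2 : (N `]-oo, a] + N `]a, +oo[ = 1)%E.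
  rewrite -measureU//; last first.
    apply/seteqP; split => x //=; rewrite !in_itv/= andbT => -[xa ax].
    by move: (lt_le_trans ax xa); rewrite ltxx.
  by rewrite itv_setU_setT; exact: probability_setT.
have fy : N `]a, +oo[ \is a fin_num by exact: N_fin.
suff : ((Phi (- a))%:E = (1 - Phi a)%:E)%E by move=> h; exact: (EFin_inj h).
rewrite PhiE h1 -(fineK fy); congr EFin.
have h3 : Phi a + fine (N `]a, +oo[) = 1.
  by apply: EFin_inj; rewrite EFinD PhiE fineK.
by rewrite -[in RHS]h3 (addrC (Phi a)) addrK.
Qed.

End P1.

Section P2.
Context {R : realType}.
Local Notation N := (@normal_prob R 0 1).
Implicit Types (t u v : R).

Lemma Phi_ge0 t : 0 <= Phi t.
Proof. by rewrite -lee_fin PhiE measure_ge0. Qed.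

Lemma Phi_le1 t : Phi t <= 1.
Proof. by rewrite -lee_fin PhiE; exact: probability_le1. Qed.

Lemma NocPhi u v : u <= v -> N `]u, v] = (Phi v - Phi u)%:E.
Proof.
move=> uv; have h := @Phi_split R u v uv.
have f : N `]u, v] \is a fin_num by apply: N_fin.
rewrite -(fineK f) -EFinD in h; have h' := EFin_inj h.
by rewrite -(fineK f) h' (addrC (Phi u)) addrK.
Qed.

Lemma Phi_le u v : u <= v -> Phi u <= Phi v.
Proof. by move=> uv; rewrite -subr_ge0 -lee_fin -NocPhi// measure_ge0. Qed.

Lemma Phi_shift_w u v u' v' d k : u <= v -> u' = u + d -> v' = v + d ->
  (forall x, u <= x <= v -> k <= d * x + d ^+ 2 / 2) ->
  expR k * (Phi v' - Phi u') <= Phi v - Phi u.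
Proof.
move=> uv -> -> hx; rewrite -lee_fin EFinM -!NocPhi ?lerD2r//.
exact: N_shift_w.
Qed.

Definition K (L c : R) := Phi (c + L) - Phi (c - L).

Lemma K_sym L c : K L (- c) = K L c.
Proof.
have e1 : - c + L = - (c - L) by rewrite opprB addrC.
have e2 : - c - L = - (c + L) by rewrite opprD.
rewrite /K e1 e2 !Phi_sym; lra.
Qed.

Lemma K_mono L c c' : 0 <= L -> 0 <= c' -> c' <= c -> K L c <= K L c'.
Proof.
move=> L0 c0 cc.
have := @Phi_shift_w (c' - L) (c - L) (c' + L) (c + L) (L + L) 0.
rewrite expR0 mul1r /K => h; suff : Phi (c + L) - Phi (c' + L) <= Phi (c - L) - Phi (c' - L) by lra.
apply: h.
- by lra.
- by ring.
- by ring.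
- by move=> x /andP[h1 h2]; nra.
Qed.

Lemma K_norm L c : K L c = K L `|c|.
Proof.
by case: (leP 0 c) => h; [rewrite ger0_norm | rewrite ltr0_norm // K_sym].
Qed.

Lemma K_abs L c c' : 0 <= L -> `|c'| <= `|c| -> K L c <= K L c'.
Proof. by move=> L0 h; rewrite (K_norm L c) (K_norm L c'); apply: K_mono. Qed.

Lemma K_ge0 L c : 0 <= L -> 0 <= K L c.
Proof. by move=> L0; rewrite /K subr_ge0 Phi_le// lerD2l; lra. Qed.

End P2.


Lemma two_point_add {R : realType} (p a b : R) (p0 : 0 <= p) (q0 : 0 <= 1 - p) :
  two_point p a b = measure_add (mscale (NngNum q0) (@dirac _ R a R))
                                (mscale (NngNum p0) (@dirac _ R b R)).
Proof.
apply/funext => A; rewrite measure_addE /= /mscale /= !diracE /two_point !indicE.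
by rewrite EFinD !EFinM.
Qed.

Section tpm.
Context {R : realType} (p a b : R).
Definition tpm (A : set R) : \bar R :=
  if (0 <= p) && (p <= 1) then two_point p a b A else @dirac _ R a R A.

Let tpm0 : tpm set0 = 0%E.
Proof.
rewrite /tpm; case: ifP => _; last exact: measure0.
by rewrite /two_point !indicE !in_set0 !mulr0 addr0.
Qed.

Let tpm_ge0 A : (0 <= tpm A)%E.
Proof.
rewrite /tpm; case: ifP => [/andP[p0 p1]|_]; last exact: measure_ge0.
rewrite /two_point lee_fin addr_ge0// mulr_ge0// ?subr_ge0//; exact: indic_ge0.
Qed.

Let tpm_sa : semi_sigma_additive tpm.
Proof.
have [/andP[p0 p1]|h] := boolP ((0 <= p) && (p <= 1)).
- have q0 : 0 <= 1 - p by rewrite subr_ge0.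
  have -> : tpm = two_point p a b by apply/funext => A; rewrite /tpm p0 p1.
  rewrite (two_point_add p a b p0 q0); exact: measure_semi_sigma_additive.
- have -> : tpm = @dirac _ R a R by apply/funext => A; rewrite /tpm (negbTE h).
  exact: measure_semi_sigma_additive.
Qed.

HB.instance Definition _ := isMeasure.Build _ _ _ tpm tpm0 tpm_ge0 tpm_sa.

Let tpm_setT : tpm setT = 1%E.
Proof.
rewrite /tpm; case: ifP => _; last by rewrite diracE in_setT.
by rewrite /two_point !indicE !in_setT !mulr1 subrK.
Qed.

HB.instance Definition _ := @Measure_isProbability.Build _ _ R tpm tpm_setT.

End tpm.

Section P3.
Context {R : realType}.

Lemma int_tp (nu : probability R R) (p a b : R) (p0 : 0 <= p) (p1 : p <= 1)
  (hnu : forall A, measurable A -> nu A = two_point p a b A)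
  (f : R -> R) (mf : measurable_fun setT f) (f0 : forall x, 0 <= f x) :
  (\int[nu]_(x in setT) (f x)%:E = ((1 - p) * f a + p * f b)%:E)%E.
Proof.
have q0 : 0 <= 1 - p by rewrite subr_ge0.
rewrite (eq_measure_integral (measure_add (mscale (NngNum q0) (@dirac _ R a R))
                                (mscale (NngNum p0) (@dirac _ R b R)))); last first.
  move=> A mA _; apply: (eq_trans (hnu A mA)).
  by rewrite (two_point_add p a b p0 q0).
have mf' : measurable_fun setT (fun x => (f x)%:E) by exact/measurable_EFinP.
apply: eq_trans; first apply: (@ge0_integral_measure_add _ _ _ (mscale (NngNum q0) (@dirac _ R a R))
   (mscale (NngNum p0) (@dirac _ R b R)) setT measurableT (fun x => (f x)%:E)).
- by move=> x _; rewrite lee_fin.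
- exact: mf'.
rewrite /= !ge0_integral_mscale//; try by move=> x _; rewrite lee_fin.
rewrite !integral_dirac// !diracE !in_setT !mul1e /=.
by rewrite -!EFinM -EFinD.
Qed.

End P3.

Section P4.
Context {R : realType}.

Lemma mPhi (t : R) : measurable_fun setT (fun x : R => Phi (t - x)).
Proof.
apply: nonincreasing_measurable => // x y xy; apply: Phi_le.
by rewrite lerD2l lerN2.
Qed.

Lemma int_bdd (nu : probability R R) (f : R -> R) (M : R) :
  measurable_fun setT f -> (forall x, `|f x| <= M) ->
  nu.-integrable setT (EFin \o f).
Proof.
move=> mf fM; apply/integrableP; split; first exact/measurable_EFinP.
apply: (@le_lt_trans _ _ (\int[nu]_(x in setT) (cst M%:E) x)%E).
  apply: ge0_le_integral => //.
  - apply: measurableT_comp; first exact: abse_measurable.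
    exact/measurable_EFinP.
  - by move=> x _; rewrite /= lee_fin fM.
rewrite integral_cst// [X in (_ * X)%E](_ : _ = 1%E) ?mule1 ?ltry//.
exact: probability_setT.
Qed.

Lemma Lgen (nu : probability R R) (f : R -> R) (M al be q : R) :
  measurable_fun setT f -> (forall x, `|f x| <= M) ->
  be <= 0 -> (nu [set x : R | (0 < x)%R] <= q%:E)%E ->
  (forall x, al + be * \1_[set x : R | 0 < x] x <= f x) ->
  al + be * q <= Rintegral nu setT f.
Proof.
move=> mf fM be0 hq hf.
set B := [set x : R | 0 < x].
have mB : measurable B by rewrite /B -set_itvoy.
have mg : measurable_fun setT (fun x => al + be * \1_B x).
  by apply: measurable_funD => //; apply: measurable_funM.
have ig : nu.-integrable setT (EFin \o (fun x => al + be * \1_B x)).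
  apply: (@int_bdd nu _ (`|al| + `|be|)) => // x.
  apply: (le_trans (ler_normD _ _)); rewrite lerD2l normrM.
  rewrite indicE; case: (x \in B); rewrite ?normr1 ?normr0 ?mulr1 ?mulr0//.
have ie : nu.-integrable setT (EFin \o (fun x => \1_B x : R)).
  apply: (@int_bdd nu _ 1) => // [|x]; first exact: measurable_indic.
  by rewrite indicE; case: (x \in B); rewrite ?normr1 ?normr0.
apply: (le_trans _ (le_Rintegral measurableT ig (@int_bdd nu f M mf fM) _)); last by move=> x _; exact: hf.
rewrite RintegralD//; last 2 first.
- by apply: (@int_bdd nu _ `|al|).
- apply: (@int_bdd nu _ (`|be|)) => // [|x].
    by apply: measurable_funM => //; exact: measurable_indic.
  rewrite normrM indicE; case: (x \in B); rewrite ?normr1 ?normr0 ?mulr1 ?mulr0//.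
rewrite Rintegral_cst// [X in fine X](_ : _ = 1%E); last exact: probability_setT.
rewrite /= mulr1 lerD2l RintegralZl//.
rewrite /Rintegral integral_indic// setIT.
have fB : nu B \is a fin_num.
  rewrite ge0_fin_numE ?measure_ge0//.
  exact: (le_lt_trans (probability_le1 nu mB) (ltey _)).
have hq' : fine (nu B) <= q by rewrite -lee_fin fineK.
by rewrite ler_wnM2l.
Qed.

End P4.

Section P5.
Context {R : realType}.
Implicit Types (z g t : R).

Definition Fo z g t := (1 - z / 2) * Phi t + z / 2 * Phi (t - (g + g)).
Definition Fs z g t := (1 - z) * Phi t + z * Phi (t - g).
Definition Do z g t := Fo z g t - Fs z g t.

Lemma PE (x y : R) : x = y -> Phi x = Phi y. Proof. by move=> ->. Qed.
Lemma PS (x y : R) : x = - y -> Phi x = 1 - Phi y. Proof. by move=> ->; exact: Phi_sym. Qed.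

Lemma Do_ge0 z g t : 0 <= z -> 0 < g -> t <= g -> 0 <= Do z g t.
Proof.
move=> z0 g0 tg.
have := @K_abs R (g / 2) (t - 3 * g / 2) (t - g / 2).
rewrite /K (PE (t - 3 * g / 2 + g / 2) (t - g)); last by lra.
rewrite (PE (t - 3 * g / 2 - g / 2) (t - (g + g))); last by lra.
rewrite (PE (t - g / 2 + g / 2) t); last by lra.
rewrite (PE (t - g / 2 - g / 2) (t - g)); last by lra.
move=> h; have {h} h : Phi (t - g) - Phi (t - (g + g)) <= Phi t - Phi (t - g).
  apply: h; first by lra.
  rewrite (@ler0_norm _ (t - 3 * g / 2)); last by lra.
  by rewrite ler_norml; lra.
rewrite /Do /Fo /Fs.
have := @mulr_ge0 _ (z / 2) (Phi t - Phi (t - g) - (Phi (t - g) - Phi (t - (g + g)))).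
by move=> /(_ ltac:(lra) ltac:(lra)); lra.
Qed.

Lemma Do_anti z g t : Do z g (g + g - t) = - Do z g t.
Proof.
rewrite /Do /Fo /Fs.
rewrite (PS (g + g - t) (t - (g + g))); last by lra.
rewrite (PS (g + g - t - (g + g)) t); last by lra.
rewrite (PS (g + g - t - g) (t - g)); last by lra.
lra.
Qed.

Lemma arith (r m X Y Fot Fst Fos Fss : R) :
  Fos - Fss = - (Fot - Fst) -> r * Fot - Fos <= r * X - Y ->
  r * (X - Fst) <= r * m -> - m <= Y - Fss ->
  (r + 1) * (Fot - Fst) <= (r + 1) * m.
Proof. move=> h1 h2 h3 h4; nra. Qed.

Lemma core z g (nu_star nu : probability R R) (z0 : 0 < z) (z1 : z <= 1) (g0 : 0 < g)
  (hstar : forall A : set R, measurable A -> nu_star A = two_point z 0 g A)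
  (hnu : (nu [set x : R | (0 < x)%R] <= (z / 2)%:E)%E)
  (m : R) (hm : forall t, `|Fmix nu t - Fmix nu_star t| <= m) t (tg : t <= g) :
  Do z g t <= m.
Proof.
have Fs_eq x : Fmix nu_star x = Fs z g x.
  rewrite /Fmix /Fs.
  transitivity (fine (((1 - z) * Phi (x - 0) + z * Phi (x - g))%:E)).
    congr fine.
    exact: (int_tp nu_star z 0 g (ltW z0) z1 hstar (fun y => Phi (x - y)) (mPhi x) (fun y => Phi_ge0 _)).
  by rewrite /= subr0.
set s := g + g - t.
set d := s - t.
set r := expR (g * d).
have d0 : 0 <= d by rewrite /d /s; lra.
have r0 : 0 < r := expR_gt0 _.
pose psi x := r * Phi (t - x) - Phi (s - x).
have Pa x : x <= g + g -> psi (g + g) <= psi x.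
  move=> hx; rewrite /psi.
  have := @Phi_shift_w R (t - (g + g)) (t - x) (s - (g + g)) (s - x) d (- (g * d)).
  move=> /(_ _ _ _ _) h.
  have {}h := h ltac:(lra) ltac:(rewrite /d; lra) ltac:(rewrite /d; lra).
  have {}h : expR (- (g * d)) * (Phi (s - x) - Phi (s - (g + g))) <= Phi (t - x) - Phi (t - (g + g)).
    apply: h => y /andP[h1 h2].
    have := mulr_ge0 d0 (_ : 0 <= y - (t - (g + g))) => /(_ ltac:(lra)).
    rewrite /d /s; nra.
  have := ler_wpM2l (ltW r0) h; rewrite mulrA /r -expRD addrN expR0 mul1r -/r.
  lra.
have Pb x : g + g <= x -> psi (g + g) <= psi x.
  move=> hx; rewrite /psi.
  have := @Phi_shift_w R (s - x) (s - (g + g)) (t - x) (t - (g + g)) (- d) (g * d).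
  move=> /(_ _ _ _ _) h.
  have {}h := h ltac:(lra) ltac:(rewrite /d; lra) ltac:(rewrite /d; lra).
  have {}h : r * (Phi (t - (g + g)) - Phi (t - x)) <= Phi (s - (g + g)) - Phi (s - x).
    apply: h => y /andP[h1 h2].
    have := mulr_ge0 d0 (_ : 0 <= s - (g + g) - y) => /(_ ltac:(lra)).
    rewrite /d /s; nra.
  lra.
have Pc x : x <= 0 -> r * Phi t - Phi s <= psi x.
  move=> hx; rewrite /psi.
  have := @Phi_shift_w R t (t - x) s (s - x) d (- (g * d)).
  move=> /(_ _ _ _ _) h.
  have {}h := h ltac:(lra) ltac:(rewrite /d; lra) ltac:(rewrite /d; lra).
  have {}h : expR (- (g * d)) * (Phi (s - x) - Phi s) <= Phi (t - x) - Phi t.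
    apply: h => y /andP[h1 h2].
    have := mulr_ge0 d0 (_ : 0 <= y - t) => /(_ ltac:(lra)).
    have := mulr_ge0 d0 (ltW g0).
    rewrite /d /s; nra.
  have := ler_wpM2l (ltW r0) h; rewrite mulrA /r -expRD addrN expR0 mul1r -/r.
  lra.
have mpsi : measurable_fun setT psi.
  rewrite /psi; apply: measurable_funB; last exact: mPhi.
  by apply: measurable_funM => //; exact: mPhi.
have bpsi x : `|psi x| <= r + 1.
  rewrite /psi ler_norml.
  have := Phi_ge0 (t - x); have := Phi_le1 (t - x).
  have := Phi_ge0 (s - x); have := Phi_le1 (s - x).
  nra.
have be0 : psi (g + g) - (r * Phi t - Phi s) <= 0.
  by have := Pa 0 ltac:(lra); rewrite /psi !subr0; lra.
have hf x : (r * Phi t - Phi s) + (psi (g + g) - (r * Phi t - Phi s)) *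
    \1_[set x : R | (0 < x)%R] x <= psi x.
  rewrite indicE; case: (boolP (x \in _)) => [/set_mem /= x0|].
    rewrite mulr1 addrC subrK.
    by case: (leP x (g + g)) => hx; [exact: Pa | apply: Pb; exact: ltW].
  move=> /negP hx; rewrite mulr0 addr0; apply: Pc.
  by rewrite leNgt; apply/negP => x0; apply: hx; exact/mem_set.
have L := @Lgen R nu psi (r + 1) (r * Phi t - Phi s)
  (psi (g + g) - (r * Phi t - Phi s)) (z / 2) mpsi bpsi be0 hnu hf.
have iP y : nu.-integrable setT (EFin \o (fun x => Phi (y - x))).
  apply: (@int_bdd R nu _ 1); first exact: mPhi.
  by move=> x; rewrite ger0_norm ?Phi_ge0 ?Phi_le1.
have RI : Rintegral nu setT psi = r * Fmix nu t - Fmix nu s.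
  rewrite /psi RintegralB//; last first.
    apply: (@int_bdd R nu _ r).
      by apply: measurable_funM => //; exact: mPhi.
    by move=> x; rewrite normrM ger0_norm ?(ltW r0)// ger0_norm ?Phi_ge0// ler_piMr ?(ltW r0) ?Phi_le1.
  by rewrite RintegralZl.
rewrite RI in L.
have As := Do_anti z g t; rewrite -/s in As.
have h1 := hm t; have h2 := hm s.
rewrite !Fs_eq !ler_norml in h1 h2.
move: h1 h2 => /andP[h1 h1'] /andP[h2 h2'].
have E1 : r * (Fmix nu t - Fs z g t) <= r * m by rewrite ler_wpM2l// ltW.
have key : r * Phi t - Phi s + (psi (g + g) - (r * Phi t - Phi s)) * (z / 2)
    = r * Fo z g t - Fo z g s by rewrite /psi /Fo; ring.
rewrite key in L; rewrite /Do in As *.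
have E2 := arith _ _ _ _ _ _ _ _ As L E1 h2.
by move: E2; rewrite ler_pM2l // addr_gt0 // ltr01.
Qed.

End P5.


Theorem lemma9 (R : realType) (zeta gamma : R)
  (hz : 0 < zeta <= 1) (hg : 0 < gamma <= 1)
  (nu_star : probability R R)
  (hstar : forall A : set R, measurable A -> nu_star A = two_point zeta 0 gamma A) :
  exists nu_opt : probability R R,
    (forall A : set R, measurable A ->
       nu_opt A = two_point (zeta / 2) 0 (gamma *+ 2) A) /\
    (nu_opt [set x : R | (0 < x)%R] <= (zeta / 2)%:E)%E /\
    (forall nu : probability R R, (nu [set x : R | (0 < x)%R] <= (zeta / 2)%:E)%E ->
       (sup_dist nu_opt nu_star <= sup_dist nu nu_star)%E).
Proof.
move: hz hg => /andP[z0 z1] /andP[g0 g1].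
have hz2a : 0 <= zeta / 2 by lra.
have hz2b : zeta / 2 <= 1 by lra.
have hopt A : measurable A ->
    tpm (zeta / 2) 0 (gamma *+ 2) A = two_point (zeta / 2) 0 (gamma *+ 2) A.
  by move=> _; rewrite /tpm hz2a hz2b.
exists (tpm (zeta / 2) 0 (gamma *+ 2)).
split; first exact: hopt.
split.
  have mB : measurable [set x : R | (0 < x)%R] by rewrite -set_itvoy.
  have e := hopt _ mB.
  suff le1 : (two_point (zeta / 2) 0 (gamma *+ 2) [set x : R | (0 < x)%R] <= (zeta / 2)%:E)%E.
    exact: (eq_ind_r (fun y => (y <= (zeta / 2)%:E)%E) le1 e).
  rewrite /two_point !indicE.
  have -> : ((0:R) \in [set x : R | 0 < x]) = false.
    by apply/negbTE/negP => /set_mem /=; rewrite ltxx.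
  have -> : (gamma *+ 2 \in [set x : R | 0 < x]) = true.
    by apply/mem_set => /=; rewrite mulrn_wgt0.
  by rewrite mulr0 add0r mulr1.
move=> nu hnu.
have Fs_eq x : Fmix nu_star x = Fs zeta gamma x.
  rewrite /Fmix /Fs.
  transitivity (fine (((1 - zeta) * Phi (x - 0) + zeta * Phi (x - gamma))%:E)).
    congr fine.
    exact: (int_tp nu_star zeta 0 gamma (ltW z0) z1 hstar (fun y => Phi (x - y)) (mPhi x) (fun y => Phi_ge0 _)).
  by rewrite /= subr0.
have Fo_eq x : Fmix (tpm (zeta / 2) 0 (gamma *+ 2)) x = Fo zeta gamma x.
  rewrite /Fmix /Fo.
  transitivity (fine (((1 - zeta / 2) * Phi (x - 0) + zeta / 2 * Phi (x - gamma *+ 2))%:E)).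
    congr fine.
    exact: (int_tp (tpm (zeta / 2) 0 (gamma *+ 2)) (zeta / 2) 0 (gamma *+ 2) hz2a hz2b hopt
      (fun y => Phi (x - y)) (mPhi x) (fun y => Phi_ge0 _)).
  by rewrite /= subr0 mulr2n.
rewrite /sup_dist; apply: ub_ereal_sup => _ [t _ <-].
set S := ereal_sup _.
have ubS x : ((`|Fmix nu x - Fmix nu_star x|)%:E <= S)%E.
  by apply: ereal_sup_ubound; exists x.
move: ubS; case: S => [m| |] ubS; last first.
- by move: (ubS 0); rewrite leeNy_eq.
- exact: leey.
have hm x : `|Fmix nu x - Fmix nu_star x| <= m by rewrite -lee_fin.
rewrite lee_fin Fo_eq Fs_eq.
change (`|Do zeta gamma t| <= m).
case: (leP t gamma) => tg.
  rewrite ger0_norm; last exact: Do_ge0 (ltW z0) g0 tg.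
  exact: (core zeta gamma nu_star nu z0 z1 g0 hstar hnu m hm t tg).
have tg' : gamma + gamma - t <= gamma by lra.
have := Do_anti zeta gamma (gamma + gamma - t).
rewrite (_ : gamma + gamma - (gamma + gamma - t) = t); last by ring.
move=> ->; rewrite normrN ger0_norm; last exact: Do_ge0 (ltW z0) g0 tg'.
exact: (core zeta gamma nu_star nu z0 z1 g0 hstar hnu m hm _ tg').
Qed.
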